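(* Let $w:[0,1]\to\mathbb{R}^+$ be a non-increasing differentiable function (extended to $\mathbb{R}$ by $w(y)=w(0)$ for $y\le0$, $w(y)=w(1)$ for $y\ge1$), and let $R$ be a $k\times k$ doubly stochastic matrix with eigenvalues $1,\lambda_1,\dots,\lambda_s$. Then $\frac1k\mathbf 1$ is a stable equilibrium of the ODE $\dot y=h(y)$, where $h(y)=\frac{\mathbf{w}(y)}{S_w(y)}R-y$, if $$\Re(\lambda_i)>\frac{k\,w(1/k)}{w'(1/k)}\qquad\text{for all } i=1,\dots,s.$$
   Context: $\mathbf 1=(1,\dots,1)\in\mathbb{R}^k$ (row vector). For $y\in\mathbb{R}^k$, $\mathbf{w}(y)=(w(y_1),\dots,w(y_k))$ and $S_w(y)=\sum_i w(y_i)$. $R$ doubly stochastic means nonnegative entries with all row and column sums $1$; $1$ is its maximal eigenvalue and $\lambda_1,\dots,\lambda_s$ denote its remaining distinct eigenvalues. An equilibrium $x^*$ of $\dot y=h(y)$ (i.e. $h(x^* )=0$) is called stable if all eigenvalues of the Jacobian matrix of $h$ at $x^*$ have negative real part. *)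

(* Defs.v *)
From HB Require Import structures.
From mathcomp Require Import all_boot all_order all_algebra.
From mathcomp Require Import all_classical all_reals all_analysis.
From mathcomp Require Import complex.
Set Implicit Arguments. Unset Strict Implicit. Unset Printing Implicit Defensive.
Import Order.TTheory GRing.Theory Num.Theory numFieldNormedType.Exports.
Local Open Scope ring_scope.

Definition doubly_stochastic (R : realType) (k : nat) (A : 'M[R]_k) : Prop :=
  [/\ forall i j, 0 <= A i j,
      forall i, \sum_j A i j = 1 &
      forall j, \sum_i A i j = 1].

Definition ceigenvalue (R : realType) (n : nat) (A : 'M[R]_n) (z : R[i]) : bool :=
  eigenvalue (map_mx (fun x : R => (x%:C)%C) A) z.

Definition wvec (R : realType) (k : nat) (w : R -> R) (y : 'rV[R]_k) : 'rV[R]_k :=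
  \row_i w (y 0 i).
Definition Sw (R : realType) (k : nat) (w : R -> R) (y : 'rV[R]_k) : R :=
  \sum_i w (y 0 i).

Definition hfield (R : realType) (k : nat) (w : R -> R) (A : 'M[R]_k)
  (y : 'rV[R]_k) : 'rV[R]_k :=
  (Sw w y)^-1 *: (wvec w y *m A) - y.

(* x is a stable equilibrium of y' = f(y): f(x) = 0, f differentiable at x
   (so the Jacobian exists) and every (complex) eigenvalue of the Jacobian
   of f at x has negative real part. *)
Definition stable_equilibrium (R : realType) (k : nat)
  (f : 'rV[R]_k -> 'rV[R]_k) (x : 'rV[R]_k) : Prop :=
  [/\ f x = 0, differentiable f x &
      forall z : R[i], ceigenvalue (jacobian f x) z -> complex.Re z < 0].

(* Main.v *)
Require Import Defs.
From HB Require Import structures.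
From mathcomp Require Import all_boot all_order all_algebra.
From mathcomp Require Import all_classical all_reals all_analysis.
From mathcomp Require Import complex.
From mathcomp Require Import ring lra.
Import Order.TTheory GRing.Theory Num.Theory numFieldNormedType.Exports.
Local Open Scope ring_scope.
Local Open Scope classical_set_scope.
Section S.
Variable R : numFieldType.
Lemma diff_coord n (x : 'rV[R]_n) i :
  differentiable (fun y : 'rV[R]_n => y 0 i) x /\
  'd (fun y : 'rV[R]_n => y 0 i) x = (fun y : 'rV[R]_n => y 0 i) :> ('rV[R]_n -> R).
Proof.
pose g := (fun N : 'rV[R]_n => N 0 i).
have glin : linear g by move=> a u v; rewrite /g !mxE.
pose glM := GRing.isLinear.Build _ _ _ _ _ glin.
pose f : {linear _ -> _} := HB.pack g glM.
rewrite -/g -[g]/(f : _ -> _); split.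
  exact/linear_differentiable/coord_continuous.
by rewrite diff_lin //; exact: coord_continuous.
Qed.

Lemma diff_sum (V W : normedModType R) (I : Type) (r : seq I) (f : I -> V -> W) x :
  (forall i, differentiable (f i) x) ->
  differentiable (fun y => \sum_(i <- r) f i y) x /\
  'd (fun y => \sum_(i <- r) f i y) x = (fun v => \sum_(i <- r) 'd (f i) x v) :> (V -> W).
Proof.
move=> df; elim: r => [|a r [IH1 IH2]].
  have -> : (fun y : V => \sum_(i <- [::]) f i y) = cst 0.
    by apply/funext => y; rewrite big_nil.
  split=> //; rewrite diff_cst; apply/funext => v; by rewrite big_nil.
have -> : (fun y => \sum_(i <- a :: r) f i y) = f a + (fun y => \sum_(i <- r) f i y).
  by apply/funext => y; rewrite big_cons.
split; first exact: differentiableD.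
have E := diffD (df a) IH1.
apply/funext => v; rewrite big_cons.
have := congr1 (fun g => g v) E; rewrite /= => ->.
congr (_ + _); exact: (congr1 (fun g => g v) IH2).
Qed.

Lemma diff_id_lem n (x : 'rV[R]_n) : differentiable (fun y : 'rV[R]_n => y) x /\
  'd (fun y : 'rV[R]_n => y) x = (fun y => y) :> ('rV[R]_n -> 'rV[R]_n).
Proof. have [h1 h2] := @is_diff_id R _ x. by split. Qed.

Lemma diff_g n (w : R -> R) (x : 'rV[R]_n) i :
  differentiable w (x 0 i) ->
  differentiable (fun y : 'rV[R]_n => w (y 0 i)) x /\
  'd (fun y : 'rV[R]_n => w (y 0 i)) x = (fun v => v 0 i * derive1 w (x 0 i)) :> ('rV[R]_n -> R).
Proof.
move=> dw; have [d1 d2] := diff_coord _ x i.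
have -> : (fun y : 'rV[R]_n => w (y 0 i)) = w \o (fun y => y 0 i) by [].
split; first exact: differentiable_comp.
rewrite diff_comp // d2 diff1E //.
Qed.
End S.
Section T.
Variable R : realType.
Lemma alg_id k (A : 'M[R]_k) (a : R) (v : 'rV[R]_k) :
  (forall j, \sum_i A i j = 1) ->
  \sum_i (a * v 0 i - a / k%:R * \sum_j v 0 j) *: row i A - v =
  v *m (a *: (A - k%:R^-1 *: const_mx 1) - 1%:M).
Proof.
move=> cs; rewrite mulmxBr mulmx1; congr (_ - v).
rewrite -scalemxAr mulmxBr; apply/rowP => j; rewrite summxE !mxE.
under eq_bigr do rewrite !mxE.
rewrite (eq_bigr (fun i => a * (v 0 i * A i j) - a / k%:R * (\sum_j v 0 j) * A i j)); last first.
  by move=> i _; rewrite mulrBl mulrA [a * v 0 i]mulrC -mulrA [_ * a]mulrC.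
rewrite sumrB -mulr_sumr -mulr_sumr cs.
under [X in _ = _ * (_ - X)]eq_bigr do rewrite !mxE.
rewrite -mulr_suml.

ring.
Qed.
Lemma diff_h k (w : R -> R) (A : 'M[R]_k) :
  (0 < k)%N -> differentiable w (k%:R^-1 : R) -> w (k%:R^-1) != 0 ->
  (forall j, \sum_i A i j = 1) ->
  differentiable (hfield w A) (const_mx (k%:R^-1 : R) : 'rV[R]_k) /\
  'd (hfield w A) (const_mx (k%:R^-1 : R) : 'rV[R]_k) =
   (fun v => v *m ((derive1 w (k%:R^-1) / (k%:R * w (k%:R^-1))) *:
      (A - k%:R^-1 *: const_mx 1) - 1%:M)) :> ('rV[R]_k -> 'rV[R]_k).
Proof.
move=> k0 dw c0 cs.
set x := const_mx (k%:R^-1) : 'rV[R]_k.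
set c := w (k%:R^-1); set d := derive1 w (k%:R^-1).
have xi i : x 0 i = k%:R^-1 by rewrite mxE.
have dwx i : differentiable w (x 0 i) by rewrite xi.
have gd i := diff_g _ _ w x i (dwx i).
have [Sd1 Sd2] := diff_sum _ _ _ _ (index_enum 'I_k) ((fun i (y : 'rV[R]_k) => w (y 0 i)) : 'I_k -> 'rV[R]_k -> Num.NumField.sort R) x
   (fun i => (gd i).1).
have Sx : Sw w x = k%:R * c.
  have -> : Sw w x = \sum_(i < k) c by apply: eq_bigr => i _; rewrite xi.
  by rewrite sumr_const card_ord mulr_natl.
have SE : Sw w = (fun y : 'rV[R]_k => \sum_(i <- index_enum 'I_k) w (y 0 i)) by [].
have kc0 : k%:R * c != 0 by rewrite mulf_neq0 // pnatr_eq0 -lt0n.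
have qd i : differentiable ((fun y => (Sw w y)^-1) * (fun y : 'rV[R]_k => w (y 0 i))) x.
  apply: differentiableM; last exact: (gd i).1.
  by apply: differentiableV; rewrite ?Sx // SE.
have heq : hfield w A = (fun y => \sum_(i <- index_enum 'I_k)
   (fun i y => ((fun y => (Sw w y)^-1) * (fun y : 'rV[R]_k => w (y 0 i))) y *: row i A) i y)
   - (fun y => y).
  apply/funext => y; rewrite /hfield mulmx_sum_row scaler_sumr; congr (_ - _).
  by apply eq_bigr => i _; rewrite scalerA mxE.
have [D1 D2] := diff_sum _ _ _ _ (index_enum 'I_k)
   (fun i y => ((fun y => (Sw w y)^-1) * (fun y : 'rV[R]_k => w (y 0 i))) y *: row i A) x
   (fun i => differentiableZl _ (qd i)).
have [I1 I2] := diff_id_lem _ _ x.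
have Sx0 : Sw w x != 0 by rewrite Sx.
rewrite heq; split; first exact: differentiableB.
have E1 := diffB D1 I1.
have Dq i : 'd (fun y => ((fun y => (Sw w y)^-1) * (fun y : 'rV[R]_k => w (y 0 i))) y *: row i A) x
   = (fun v => (d / (k%:R * c) * v 0 i - d / (k%:R * c) / k%:R * \sum_j v 0 j) *: row i A)
   :> ('rV[R]_k -> 'rV[R]_k).
  have E2 := diffZl (row i A) (qd i).
  have E3 := diffM (differentiableV Sd1 Sx0) (gd i).1.
  have E4 : 'd (fun y => (Sw w y)^-1) x = - (Sw w x)^-2 \*: 'd (Sw w) x :> ('rV[R]_k -> R)
    := diffV Sd1 Sx0.
  have E5 : 'd (Sw w) x = (fun v => \sum_i 'd (fun y : 'rV[R]_k => w (y 0 i)) x v) :> ('rV[R]_k -> R) := Sd2.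
  apply/funext => v.
  have e2 := congr1 (fun g => g v) E2.
  have e3 := congr1 (fun g => g v) E3.
  have e4 := congr1 (fun g => g v) (diffV Sd1 Sx0).
  have e5 := congr1 (fun g => g v) Sd2.
  have e6 j := congr1 (fun g => g v) (gd j).2.
  simpl in e2, e3, e4, e5, e6.
  rewrite e2 e3 /= addrfctE /= /GRing.scale_fun /=.
  rewrite e4 /= /GRing.scale_fun /= e5.
  have e7 j : 'd (fun y : 'rV[R]_k => w (y 0 j)) x v = v 0 j * d by rewrite e6 xi.
  rewrite e7.
  have Sx' : \sum_(i < k) w (x 0 i) = k%:R * c := Sx.
  rewrite Sx' (eq_bigr (fun j => v 0 j * d)); last by move=> j _; exact: e7.
  rewrite -mulr_suml xi -/c; congr (_ *: _).
  have kn0 : k%:R != 0 :> R by rewrite pnatr_eq0 -lt0n.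
  rewrite /GRing.scale /=. field. by rewrite c0 kn0.
apply/funext => v.
have f1 := congr1 (fun g => g v) E1.
have f2 := congr1 (fun g => g v) D2.
have f3 := congr1 (fun g => g v) I2.
simpl in f1, f2, f3.
apply: (eq_trans f1).
apply: (eq_trans (congr2 (fun a b => a - b) f2 f3)).
apply: (eq_trans (congr1 (fun s => s - v) (eq_bigr _ (fun i _ => congr1 (fun g => g v) (Dq i))))).
rewrite /=.
exact: alg_id.

Qed.
End T.
Section U.
Variable R : realType.
Local Open Scope complex_scope.
Lemma Re_aff (a : R) (m : R[i]) : complex.Re (a%:C * m - 1) = a * complex.Re m - 1.
Proof. by case: m => p q /=; rewrite mul0r subr0. Qed.

Lemma eig_neg k (A : 'M[R]_k) (a : R) (z : R[i]) :
  (0 < k)%N -> (forall i, \sum_j A i j = 1) -> a <= 0 ->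
  (a < 0 -> forall mu : R[i], ceigenvalue A mu -> mu != 1 -> a^-1 < complex.Re mu) ->
  ceigenvalue (a *: (A - k%:R^-1 *: const_mx 1) - 1%:M) z -> complex.Re z < 0.
Proof.
move=> k0 rs a0 H.
set P := k%:R^-1 *: const_mx 1 : 'M[R]_k.
have kn0 : k%:R != 0 :> R by rewrite pnatr_eq0 -lt0n.
have AP : A *m P = P.
  apply/matrixP => i j; rewrite !mxE.
  under eq_bigr do rewrite !mxE.
  by rewrite -mulr_suml rs mul1r.
have PP : P *m P = P.
  apply/matrixP => i j; rewrite !mxE; under eq_bigr do rewrite !mxE.
  rewrite sumr_const card_ord -mulr_natl. by field.
have QP : (A - P) *m P = 0 by rewrite mulmxBl AP PP subrr.
rewrite /ceigenvalue.
set f := real_complex R.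
have Mf : map_mx (fun x : R => x%:C) (a *: (A - P) - 1%:M) =
    a%:C *: (map_mx f A - map_mx f P) - 1%:M.
  by rewrite (_ : (fun x : R => x%:C) = f) // map_mxB map_mxZ map_mx1 map_mxB.
rewrite Mf => /eigenvalueP [v Hv vn0].
set A' := map_mx f A; set P' := map_mx f P.
have QP' : (A' - P') *m P' = 0 by rewrite -map_mxB -map_mxM QP map_mx0.
have H1 : a%:C *: (v *m (A' - P')) = (z + 1) *: v.
  by rewrite scalerDl scale1r -Hv [in RHS]mulmxBr mulmx1 -scalemxAr subrK.
have [a00|an0] := eqVneq a 0.
  move: H1; rewrite a00 scale0r => /esym/eqP; rewrite scaler_eq0 (negPf vn0) orbF addr_eq0.
  move=> /eqP ->.
  have -> : (-1 : R[i]) = 0%:C * 0 - 1 by rewrite mul0r sub0r.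
  by rewrite Re_aff mul0r sub0r ltrN10.
have alt : a < 0 by rewrite lt_neqAle an0 a0.
have ac0 : a%:C != 0 by rewrite fmorph_eq0.
set mu := (z + 1) / a%:C.
have Hmu : v *m (A' - P') = mu *: v.
  by rewrite /mu mulrC -scalerA -H1 scalerA mulVf // scale1r.
have zE : z = a%:C * mu - 1 by rewrite /mu mulrC -mulrA mulVf // mulr1 addrK.
have [mu0|mun0] := eqVneq mu 0.
  by rewrite zE mu0 Re_aff /= mulr0 sub0r ltrN10.
have vP0 : v *m P' = 0.
  have : mu *: (v *m P') = 0 by rewrite scalemxAl -Hmu -mulmxA QP' mulmx0.
  by move/eqP; rewrite scaler_eq0 (negPf mun0) => /eqP.
have evA : ceigenvalue A mu.
  apply/eigenvalueP; exists v => //.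
  change (v *m A' = mu *: v). by rewrite -Hmu mulmxBr vP0 subr0.
have [mu1|mun1] := eqVneq mu 1.
  by rewrite zE mu1 Re_aff /= mulr1 subr_lt0 (lt_trans alt ltr01).
have := H alt mu evA mun1.
rewrite zE Re_aff => hh.
by rewrite subr_lt0 -(mulfV an0) ltr_nM2l.
Qed.
Lemma nincr_derive1_le0 (f : R -> R) (D : set R) (x : R) :
  {in D° : set R, forall x, derivable f x 1%R} ->
  (forall a b, D a -> D b -> a < b -> f b <= f a) ->
  D° x -> derive1 f x <= 0.
Proof.
move=> df decrf Dx.
apply: limr_le.
  under eq_fun; first (move=> h; rewrite -{2}(scaler1 h); over).
  by apply: df; rewrite inE.
have [e /= e0 Hball] := open_subball (open_interior D) Dx.
near=> h.
have h0 : h != 0%R by near: h; exact: nbhs_dnbhs_neq.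
have Dhx : D° (h + x).
  apply: (Hball (`|2 * h|%R)) => //.
  - rewrite /= sub0r normrN normr_id normrM ger0_norm// -ltr_pdivlMl//.
      by near: h; apply: dnbhs0_lt; exact: mulr_gt0.
    by rewrite normrM ger0_norm// mulr_gt0// normr_gt0.
  apply: ball_sym; rewrite /ball/= addrK.
  by rewrite normrM (@ger0_norm _ 2)// ltr_pMl ?normr_gt0// ltr1n.
move: h0; rewrite neq_lt => /orP[h0|h0].
- rewrite nmulr_rle0 ?invr_lt0// subr_ge0.
  by apply: decrf; [exact: interior_subset|exact: interior_subset|rewrite gtrDr].
- rewrite pmulr_rle0 ?invr_gt0// subr_le0.
  by apply: decrf; [exact: interior_subset|exact: interior_subset|rewrite ltrDr].
Unshelve. end_near. Qed.

Lemma w_der_le0 (w : R -> R) (y : R) :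
  0 < y < 1 -> (forall y, 0 < y < 1 -> derivable w y 1) ->
  (forall a b, 0 <= a -> a <= b -> b <= 1 -> w b <= w a) ->
  derive1 w y <= 0.
Proof.
move=> y01 dw nincr.
apply: (@nincr_derive1_le0 w [set` `]0, 1[%R]).
- move=> t; rewrite inE interior_itv /= in_itv /= => /andP[t0 t1].
  by apply: dw; rewrite t0 t1.
- move=> a b; rewrite /= !in_itv /= => /andP[a0 a1] /andP[b0 b1] ab.
  by apply: nincr; rewrite ?ltW.
- by rewrite interior_itv /= in_itv.
Qed.

Lemma jac_eq k (f : 'rV[R]_k -> 'rV[R]_k) x M :
  'd f x = (fun v => v *m M) :> ('rV[R]_k -> 'rV[R]_k) -> jacobian f x = M.
Proof.
move=> E; apply/matrixP => i j; rewrite /jacobian mxE.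
have := congr1 (fun g => g (delta_mx 0 i)) E => /= ->.
by rewrite -rowE mxE.
Qed.
Lemma hfield_eq0 k (w : R -> R) (A : 'M[R]_k) :
  (0 < k)%N -> w (k%:R^-1) != 0 -> (forall j, \sum_i A i j = 1) ->
  hfield w A (const_mx (k%:R^-1 : R)) = 0.
Proof.
move=> k0 c0 cs; apply/rowP => j.
have kn0 : k%:R != 0 :> R by rewrite pnatr_eq0 -lt0n.
rewrite /hfield /Sw !mxE.
under eq_bigr do rewrite !mxE.
under [X in _ * X]eq_bigr do rewrite !mxE.
rewrite -mulr_sumr cs sumr_const card_ord -mulr_natl.
by field; rewrite kn0 mulr1 c0.
Qed.

Lemma case1 (w : R -> R) (A : 'M[R]_1) :
  (forall y, w y != 0) -> (forall j, \sum_i A i j = 1) ->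
  hfield w A = (fun y => const_mx 1 - y).
Proof.
move=> wnz cs; apply/funext => y; apply/rowP => j.
rewrite /hfield /Sw !mxE !big_ord1 !mxE.
have := cs j; rewrite big_ord1 => ->.
by rewrite mulr1 mulVf.
Qed.

Lemma diff_case1 (w : R -> R) (A : 'M[R]_1) (x : 'rV[R]_1) :
  (forall y, w y != 0) -> (forall j, \sum_i A i j = 1) ->
  differentiable (hfield w A) x /\
  'd (hfield w A) x = (fun v => v *m (0 *: (A - 1%:R^-1 *: const_mx 1) - 1%:M))
    :> ('rV[R]_1 -> 'rV[R]_1).
Proof.
move=> wnz cs; rewrite (case1 w A wnz cs).
have [I1 I2] := diff_id_lem _ _ x.
have -> : (fun y : 'rV[R]_1 => const_mx 1 - y) = cst (const_mx 1) - (fun y => y).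
  by apply/funext.
split; first exact: differentiableB.
apply/funext => v.
have f1 := congr1 (fun g => g v) (diffB (differentiable_cst (const_mx 1 : 'rV[R]_1) x) I1).
have f3 := congr1 (fun g => g v) I2.
simpl in f1, f3.
apply: (eq_trans f1).
have f4 := congr1 (fun g => g v) (@diff_cst _ _ _ (const_mx 1 : 'rV[R]_1) x).
simpl in f4.
apply: (eq_trans (congr2 (fun a b => a - b) f4 f3)).
by rewrite /= scale0r sub0r mulmxBr mulmx0 mulmx1 sub0r.
Qed.
End U.

Theorem proposition3 (R : realType) (k : nat) (w : R -> R) (A : 'M[R]_k) :
  (0 < k)%N ->
  (* w : [0,1] -> R^+ *)
  (forall y, 0 <= y <= 1 -> 0 < w y) ->
  (* non-increasing on [0,1] *)
  (forall x y, 0 <= x -> x <= y -> y <= 1 -> w y <= w x) ->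
  (* differentiable on [0,1] (one-sided at the endpoints) *)
  (forall y, 0 < y < 1 -> derivable w y 1) ->
  cvg ((fun t : R => t^-1 * (w t - w 0)) @ 0^'+) ->
  cvg ((fun t : R => t^-1 * (w (1 + t) - w 1)) @ 0^'-) ->
  (* extension to R *)
  (forall y, y <= 0 -> w y = w 0) ->
  (forall y, 1 <= y -> w y = w 1) ->
  doubly_stochastic A ->
  (forall z : R[i], ceigenvalue A z -> z != 1 ->
     (k%:R * w (k%:R^-1)) / derive1 w (k%:R^-1) < complex.Re z) ->
  stable_equilibrium (hfield w A) (const_mx (k%:R^-1)).
Proof.
move=> k0 wpos nincr wder _ _ wl wr [Apos rs cs] Heig.
have kge1 : 1 <= k%:R :> R by rewrite ler1n.
have kgt0 : 0 < k%:R :> R by rewrite ltr0n.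
have kinv01 : 0 <= (k%:R^-1 : R) <= 1.
  by rewrite invr_ge0 ltW //= invf_le1.
have cpos : 0 < w (k%:R^-1) by apply: wpos.
have c0 : w (k%:R^-1) != 0 by rewrite gt_eqF.
have wnz y : w y != 0.
  have [y0|y0] := leP y 0; first by rewrite wl // gt_eqF // wpos // lexx ler01.
  have [y1|y1] := leP 1 y; first by rewrite wr // gt_eqF // wpos // ler01 lexx.
  by rewrite gt_eqF // wpos // !ltW.
have [a [Hd [HJ [Ha0 Hneg]]]] : exists a : R,
    differentiable (hfield w A) (const_mx (k%:R^-1 : R) : 'rV[R]_k) /\
    jacobian (hfield w A) (const_mx (k%:R^-1 : R)) = a *: (A - k%:R^-1 *: const_mx 1) - 1%:M /\
    a <= 0 /\
    (a < 0 -> forall mu : R[i], ceigenvalue A mu -> mu != 1 -> a^-1 < complex.Re mu).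
  have [k1|k2] := eqVneq k 1%N.
    subst k; exists 0; have [D1 D2] := diff_case1 _ w A (const_mx (1%:R^-1 : R)) wnz cs.
    by split => //; split; [exact: jac_eq | split => //; rewrite ltxx].
  have k2' : (1 < k)%N by rewrite ltn_neqAle eq_sym k2 k0.
  have kin : 0 < (k%:R^-1 : R) < 1.
    by rewrite invr_gt0 kgt0 /= invf_lt1 // ltr1n.
  have dw : differentiable w (k%:R^-1 : R) by apply/derivable1_diffP; exact: wder.
  have [D1 D2] := diff_h _ _ w A k0 dw c0 cs.
  exists (derive1 w (k%:R^-1) / (k%:R * w (k%:R^-1))).
  have dle0 := w_der_le0 _ w _ kin wder nincr.
  split => //; split; first exact: jac_eq.
  split; first by rewrite mulr_le0_ge0 // invr_ge0 ltW // mulr_gt0.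
  move=> alt mu emu mun1; rewrite invf_div; exact: Heig.
split.
- exact: hfield_eq0.
- exact: Hd.
- move=> z; rewrite HJ; exact: eig_neg.
Qed.
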